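(* Let $G_1$ and $G_2$ be metrizable SIN topological groups and let $A$ be a subgroup of both $G_1$ and $G_2$ whose subspace topologies from $G_1$ and from $G_2$ coincide. Then there exist compatible two-sided invariant metrics $d_1$ on $G_1$ and $d_2$ on $G_2$ and a constant $K>0$ such that $$\tfrac1K d_1(a_1,a_2)\le d_2(a_1,a_2)\le K d_1(a_1,a_2)\quad\text{for all } a_1,a_2\in A.$$ (In fact one can take $K=8$.)
   Context: A topological group is SIN if every neighborhood of the identity contains a neighborhood $V$ of the identity with $gVg^{-1}=V$ for all $g$. A metric is compatible if it induces the group topology; two-sided invariant means $d(gf_1,gf_2)=d(f_1,f_2)=d(f_1g,f_2g)$. *)

(* Defs.v *)
From Stdlib Require Import Reals.
Open Scope R_scope.

Record Group := {
  carrier :> Type;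
  gmul : carrier -> carrier -> carrier;
  ginv : carrier -> carrier;
  gone : carrier;
  gmul_assoc : forall x y z, gmul x (gmul y z) = gmul (gmul x y) z;
  gmul_1l : forall x, gmul gone x = x;
  gmul_Vl : forall x, gmul (ginv x) x = gone
}.

Arguments gmul {g} _ _.
Arguments ginv {g} _.
Arguments gone {g}.

Record Topology (T : Type) := {
  is_open : (T -> Prop) -> Prop;
  open_full : is_open (fun _ => True);
  open_inter : forall U V, is_open U -> is_open V ->
                 is_open (fun x => U x /\ V x);
  open_union : forall F : (T -> Prop) -> Prop,
                 (forall U, F U -> is_open U) ->
                 is_open (fun x => exists U, F U /\ U x)
}.

Arguments is_open {T} _ _.

Record TopGroup := {
  tg_group :> Group;
  tg_top : Topology tg_group;
  tg_mul_cont : forall (W : tg_group -> Prop) (x y : tg_group),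
    is_open tg_top W -> W (gmul x y) ->
    exists U V, is_open tg_top U /\ is_open tg_top V /\ U x /\ V y /\
      (forall u v, U u -> V v -> W (gmul u v));
  tg_inv_cont : forall (W : tg_group -> Prop) (x : tg_group),
    is_open tg_top W -> W (ginv x) ->
    exists U, is_open tg_top U /\ U x /\ (forall u, U u -> W (ginv u))
}.

Definition nbhd_one (G : TopGroup) (N : G -> Prop) : Prop :=
  exists U, is_open (tg_top G) U /\ U gone /\ (forall x, U x -> N x).

Definition is_SIN (G : TopGroup) : Prop :=
  forall N : G -> Prop, nbhd_one G N ->
    exists V : G -> Prop, nbhd_one G V /\ (forall x, V x -> N x) /\
      (forall (g y : G),
         (exists v, V v /\ y = gmul (gmul g v) (ginv g)) <-> V y).

Definition is_metric (T : Type) (d : T -> T -> R) : Prop :=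
  (forall x y, 0 <= d x y) /\
  (forall x y, d x y = 0 <-> x = y) /\
  (forall x y, d x y = d y x) /\
  (forall x y z, d x z <= d x y + d y z).

Definition compatible_metric (G : TopGroup) (d : G -> G -> R) : Prop :=
  is_metric G d /\
  forall U : G -> Prop,
    is_open (tg_top G) U <->
    (forall x, U x -> exists eps, 0 < eps /\ forall y, d x y < eps -> U y).

Definition metrizable (G : TopGroup) : Prop :=
  exists d, compatible_metric G d.

Definition two_sided_invariant (G : Group) (d : G -> G -> R) : Prop :=
  forall g f1 f2 : G,
    d (gmul g f1) (gmul g f2) = d f1 f2 /\
    d (gmul f1 g) (gmul f2 g) = d f1 f2.

(* j : A -> G is an injective group homomorphism, i.e. identifies A with a
   subgroup of G. *)
Definition subgroup_embedding (A G : Group) (j : A -> G) : Prop :=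
  (forall a b, j (gmul a b) = gmul (j a) (j b)) /\
  (forall a b, j a = j b -> a = b).

Definition subspace_open (G : TopGroup) (A : Type) (j : A -> G)
  (S : A -> Prop) : Prop :=
  exists U, is_open (tg_top G) U /\ forall a, S a <-> U (j a).

(* Main.v *)
Require Import Defs.
From Stdlib Require Import Reals Lra Lia List Classical ClassicalEpsilon FunctionalExtensionality PropExtensionality.
Import ListNotations.
Open Scope R_scope.

Lemma g_mulV (G : Group) (x : G) : gmul x (ginv x) = gone.
Proof.
  rewrite <- (gmul_1l G (gmul x (ginv x))).
  rewrite <- (gmul_Vl G (ginv x)) at 1.
  rewrite <- gmul_assoc. rewrite (gmul_assoc G (ginv x) x (ginv x)).
  rewrite gmul_Vl, gmul_1l. apply gmul_Vl.
Qed.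

Lemma g_mul1 (G : Group) (x : G) : gmul x gone = x.
Proof.
  rewrite <- (gmul_Vl G x), gmul_assoc, g_mulV. apply gmul_1l.
Qed.

Lemma g_cancel (G : Group) (a x y : G) : gmul a x = gmul a y -> x = y.
Proof.
  intro H. rewrite <- (gmul_1l G x), <- (gmul_1l G y), <- (gmul_Vl G a).
  rewrite <- !gmul_assoc, H. reflexivity.
Qed.

Lemma g_inv_uniq (G : Group) (x y : G) : gmul y x = gone -> y = ginv x.
Proof.
  intro H. rewrite <- (g_mul1 G y), <- (g_mulV G x), gmul_assoc, H. apply gmul_1l.
Qed.

Lemma g_invK (G : Group) (x : G) : ginv (ginv x) = x.
Proof. symmetry. apply g_inv_uniq. apply g_mulV. Qed.

Lemma g_inv1 (G : Group) : ginv (@gone G) = gone.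
Proof. symmetry. apply g_inv_uniq. apply gmul_1l. Qed.

Lemma g_invM (G : Group) (x y : G) : ginv (gmul x y) = gmul (ginv y) (ginv x).
Proof.
  symmetry. apply g_inv_uniq.
  rewrite <- gmul_assoc, (gmul_assoc G (ginv x) x y), gmul_Vl, gmul_1l. apply gmul_Vl.
Qed.

Lemma g_VKl (G : Group) (x y : G) : gmul (ginv x) (gmul x y) = y.
Proof. rewrite gmul_assoc, gmul_Vl. apply gmul_1l. Qed.

Lemma g_KVl (G : Group) (x y : G) : gmul x (gmul (ginv x) y) = y.
Proof. rewrite gmul_assoc, g_mulV. apply gmul_1l. Qed.

Lemma hom_one (A G : Group) (j : A -> G) :
  (forall a b, j (gmul a b) = gmul (j a) (j b)) -> j gone = gone.
Proof.
  intro H. apply (g_cancel G (j gone)). rewrite <- H, gmul_1l, g_mul1. reflexivity.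
Qed.

Lemma hom_inv (A G : Group) (j : A -> G) :
  (forall a b, j (gmul a b) = gmul (j a) (j b)) -> forall a, j (ginv a) = ginv (j a).
Proof.
  intros H a. apply g_inv_uniq. rewrite <- H, gmul_Vl. apply (hom_one A G j H).
Qed.
Lemma open_local (G : TopGroup) (S : G -> Prop) :
  (forall x, S x -> exists U, is_open (tg_top G) U /\ U x /\ forall y, U y -> S y) ->
  is_open (tg_top G) S.
Proof.
  intro H.
  assert (E : S = (fun x => exists U, (fun U => is_open (tg_top G) U /\ forall y, U y -> S y) U /\ U x)).
  { apply functional_extensionality. intro x. apply propositional_extensionality. split.
    - intro Sx. destruct (H x Sx) as [U [HU [Ux HS]]]. exists U. tauto.
    - intros [U [[_ HS] Ux]]. auto. }
  rewrite E. apply open_union. intros U [HU _]. exact HU.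
Qed.

Lemma open_translate (G : TopGroup) (O : G -> Prop) (x : G) :
  is_open (tg_top G) O -> O x ->
  exists V, is_open (tg_top G) V /\ V gone /\ forall v, V v -> O (gmul x v).
Proof.
  intros HO Ox. rewrite <- (g_mul1 G x) in Ox.
  destruct (tg_mul_cont G O x gone HO Ox) as [U [V [HU [HV [Ux [V1 HM]]]]]].
  exists V. repeat split; auto.
Qed.

Lemma open_inv (G : TopGroup) (Q : G -> Prop) :
  is_open (tg_top G) Q -> is_open (tg_top G) (fun x => Q (ginv x)).
Proof.
  intro HQ. apply open_local. intros x Qx.
  destruct (tg_inv_cont G Q x HQ Qx) as [U [HU [Ux HI]]].
  exists U. auto.
Qed.

Lemma open_square (G : TopGroup) (O : G -> Prop) :
  is_open (tg_top G) O -> O gone ->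
  exists P, is_open (tg_top G) P /\ P gone /\ forall a b, P a -> P b -> O (gmul a b).
Proof.
  intros HO O1. rewrite <- (gmul_1l G gone) in O1.
  destruct (tg_mul_cont G O gone gone HO O1) as [U [V [HU [HV [U1 [V1 HM]]]]]].
  exists (fun x => U x /\ V x). split; [apply open_inter; auto|]. split; [auto|].
  intros a b [Ua _] [_ Vb]. auto.
Qed.

Lemma ball_open (G : TopGroup) (d : G -> G -> R) (c : G) (r : R) :
  compatible_metric G d -> is_open (tg_top G) (fun y => d c y < r).
Proof.
  intros [[Hn [H0 [Hs Ht]]] Hc]. apply Hc. intros y Hy.
  exists (r - d c y). split; [lra|]. intros z Hz.
  specialize (Ht c y z). lra.
Qed.

Definition conj_inv (G : Group) (V : G -> Prop) :=
  forall g v, V v -> V (gmul (gmul g v) (ginv g)).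
Definition sym_set (G : Group) (V : G -> Prop) := forall v, V v -> V (ginv v).

Lemma nbhd_one_1 (G : TopGroup) V : nbhd_one G V -> V gone.
Proof. intros [U [_ [U1 H]]]. auto. Qed.

Lemma step_lemma (G : TopGroup) (hS : is_SIN G) (O : G -> Prop) :
  is_open (tg_top G) O -> O gone ->
  exists V, nbhd_one G V /\ conj_inv G V /\ sym_set G V /\
    forall a b c, V a -> V b -> V c -> O (gmul a (gmul b c)).
Proof.
  intros HO O1.
  destruct (open_square G O HO O1) as [P [HP [P1 HPP]]].
  destruct (open_square G P HP P1) as [Q [HQ [Q1 HQQ]]].
  set (Q' := fun x => Q x /\ Q (ginv x)).
  assert (HQ' : nbhd_one G Q').
  { exists Q'. split; [apply open_inter; [auto| apply open_inv; auto]|].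
    split; [|auto]. unfold Q'. rewrite g_inv1. auto. }
  destruct (hS Q' HQ') as [V0 [HV0 [HV0Q HV0c]]].
  exists (fun x => V0 x /\ V0 (ginv x)).
  split; [|split; [|split]].
  - destruct HV0 as [U [HU [U1 HUV]]].
    exists (fun x => U x /\ U (ginv x)). split; [apply open_inter; [auto|apply open_inv; auto]|].
    split; [rewrite g_inv1; auto|]. intros x [Ux Uxi]. auto.
  - intros g v [Vv Vvi]. split.
    + apply (proj1 (HV0c g _)). exists v. auto.
    + apply (proj1 (HV0c g _)). exists (ginv v). split; auto.
      rewrite !g_invM, g_invK, gmul_assoc. reflexivity.
  - intros v [Vv Vvi]. rewrite g_invK. auto.
  - intros a b c [Va _] [Vb _] [Vc _].
    apply HPP.
    + rewrite <- (g_mul1 G a). apply HQQ; [apply HV0Q; auto|auto].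
    + apply HQQ; apply HV0Q; auto.
Qed.
Lemma half_pos n : 0 < (/2)^n.
Proof. apply pow_lt. lra. Qed.

Lemma half_S n : (/2)^(S n) = /2 * (/2)^n.
Proof. reflexivity. Qed.

Lemma half_anti n m : (n <= m)%nat -> (/2)^m <= (/2)^n.
Proof.
  intro H. induction H; [lra|]. rewrite half_S. pose proof (half_pos m). lra.
Qed.

Lemma half_small eps : 0 < eps -> exists n, (/2)^n < eps.
Proof.
  intro He. assert (Rabs (/2) < 1) by (rewrite Rabs_right; lra).
  destruct (pow_lt_1_zero (/2) H eps He) as [N HN].
  exists N. specialize (HN N (le_n N)). rewrite Rabs_right in HN; auto.
  left; apply half_pos.
Qed.

Lemma le_eps (a b : R) : (forall eps, 0 < eps -> a <= b + eps) -> a <= b.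
Proof.
  intro H. destruct (Rle_or_lt a b) as [h|h]; auto.
  specialize (H ((a - b)/2)). lra.
Qed.

Record BK (G : TopGroup) := {
  bU : nat -> G -> Prop;
  bU0 : forall x, bU 0 x;
  bU_nb : forall n, nbhd_one G (bU n);
  bU_conj : forall n, conj_inv G (bU n);
  bU_sym : forall n, sym_set G (bU n);
  bU_cube : forall n a b c, bU (S n) a -> bU (S n) b -> bU (S n) c ->
     bU n (gmul a (gmul b c));
  bd0 : G -> G -> R;
  bd0_comp : compatible_metric G bd0;
  bU_small : forall n x, bU (S n) x -> bd0 gone x < (/2)^(S n)
}.

Arguments bU {G} _ _ _.

Definition prodl (G : Group) (l : list (G * nat)) : G :=
  fold_right (fun p acc => gmul (fst p) acc) gone l.
Definition weight {G : Type} (l : list (G * nat)) : R :=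
  fold_right (fun p acc => (/2)^(snd p) + acc) 0 l.
Definition adm {G : TopGroup} (D : BK G) (l : list (G * nat)) :=
  Forall (fun p => bU D (snd p) (fst p)) l.

Lemma prodl_app (G : Group) l1 l2 : prodl G (l1 ++ l2) = gmul (prodl G l1) (prodl G l2).
Proof.
  induction l1; simpl. - rewrite gmul_1l. auto. - rewrite IHl1, gmul_assoc. auto.
Qed.

Lemma weight_app {G : Type} (l1 l2 : list (G * nat)) : weight (l1 ++ l2) = weight l1 + weight l2.
Proof. induction l1; simpl; [lra|]. rewrite IHl1. lra. Qed.

Lemma weight_nonneg {G : Type} (l : list (G * nat)) : 0 <= weight l.
Proof. induction l; simpl; [lra|]. pose proof (half_pos (snd a)). lra. Qed.

Lemma bU_one {G} (D : BK G) n : bU D n gone.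
Proof. apply nbhd_one_1, bU_nb. Qed.

Lemma bU_dec {G} (D : BK G) n x : bU D (S n) x -> bU D n x.
Proof.
  intro H. rewrite <- (g_mul1 G x), <- (g_mul1 G gone). apply bU_cube; auto; apply bU_one.
Qed.

Lemma bU_mono {G} (D : BK G) n m x : (n <= m)%nat -> bU D m x -> bU D n x.
Proof. intro H. induction H; auto. intro. apply IHle, bU_dec; auto. Qed.

Lemma split_lemma {G : Type} (l : list (G * nat)) (t : R) : l <> [] -> 0 < t ->
  exists l1 x l2, l = l1 ++ x :: l2 /\ weight l1 < t /\
     (t <= weight l1 + (/2)^(snd x) \/ l2 = []).
Proof.
  revert t. induction l as [|y r IH]; intros t Hl Ht; [congruence|].
  destruct (Rle_or_lt t ((/2)^(snd y))) as [h|h].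
  - exists [], y, r. simpl. split; [reflexivity|]. split; [lra|]. left; lra.
  - destruct r as [|z r'].
    + exists [], y, []. simpl. split; [reflexivity|]. split; [lra|]. right; auto.
    + destruct (IH (t - (/2)^(snd y))) as [r1 [x [r2 [E [W1 W2]]]]]; [congruence|lra|].
      exists (y :: r1), x, r2. rewrite E. split; [reflexivity|]. simpl. split; [lra|].
      destruct W2; [left; lra|right; auto].
Qed.

Lemma key {G} (D : BK G) k : forall l m, (length l <= k)%nat -> adm D l ->
  weight l < (/2)^m -> bU D m (prodl G l).
Proof.
  induction k as [|k IH]; intros l m Hlen Ha Hw.
  - destruct l; [apply bU_one|simpl in Hlen; lia].
  - destruct l as [|p l']; [apply bU_one|].
    set (l := p :: l') in *.
    destruct (split_lemma l ((/2)^(S m))) as [l1 [x [l2 [E [W1 W2]]]]];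
      [unfold l; congruence|apply half_pos|].
    rewrite E in Ha, Hw, Hlen. rewrite E.
    rewrite length_app in Hlen. simpl in Hlen.
    apply Forall_app in Ha. destruct Ha as [Ha1 Ha2]. inversion Ha2; subst.
    rewrite weight_app in Hw. simpl in Hw.
    pose proof (weight_nonneg l1). pose proof (weight_nonneg l2).
    rewrite prodl_app. simpl.
    apply bU_cube.
    + apply IH; auto. lia.
    + apply (bU_mono D _ (snd x)); auto.
      destruct (Compare_dec.le_lt_dec (snd x) m) as [h|h]; [|lia].
      pose proof (half_anti _ _ h). lra.
    + destruct W2 as [W2|W2].
      * apply IH; auto; [lia|]. rewrite half_S in *. lra.
      * subst. apply bU_one.
Qed.
Definition Eset {G} (D : BK G) (x : G) : R -> Prop :=
  fun r => exists l, adm D l /\ prodl G l = x /\ r = - weight l.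

Lemma Ebound {G} (D : BK G) x : bound (Eset D x).
Proof.
  exists 0. intros r [l [_ [_ E]]]. pose proof (weight_nonneg l). lra.
Qed.

Lemma Ene {G} (D : BK G) x : exists r, Eset D x r.
Proof.
  exists (- weight [(x, 0%nat)]). exists [(x, 0%nat)]. split; [|split; auto].
  - constructor; [apply bU0|constructor].
  - simpl. apply g_mul1.
Qed.

Definition rho {G} (D : BK G) (x : G) : R :=
  - proj1_sig (completeness (Eset D x) (Ebound D x) (Ene D x)).

Lemma rho_spec {G} (D : BK G) x : is_lub (Eset D x) (- rho D x).
Proof. unfold rho. rewrite Ropp_involutive. apply proj2_sig. Qed.

Lemma rho_le {G} (D : BK G) x l : adm D l -> prodl G l = x -> rho D x <= weight l.
Proof.
  intros Ha Hp. destruct (rho_spec D x) as [Hu _].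
  assert (- weight l <= - rho D x) by (apply Hu; exists l; auto). lra.
Qed.

Lemma rho_approx {G} (D : BK G) x eps : 0 < eps ->
  exists l, adm D l /\ prodl G l = x /\ weight l < rho D x + eps.
Proof.
  intro He. apply NNPP. intro Hn.
  destruct (rho_spec D x) as [_ Hl].
  assert (- rho D x <= - (rho D x + eps)); [|lra].
  apply Hl. intros r [l [Ha [Hp E]]]. subst r.
  destruct (Rle_or_lt (rho D x + eps) (weight l)); [lra|].
  exfalso. apply Hn. exists l. auto.
Qed.

Lemma rho_nonneg {G} (D : BK G) x : 0 <= rho D x.
Proof.
  destruct (rho_spec D x) as [_ Hl].
  assert (- rho D x <= 0); [|lra].
  apply Hl. intros r [l [_ [_ E]]]. pose proof (weight_nonneg l). lra.
Qed.

Lemma rho_one {G} (D : BK G) : rho D gone = 0.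
Proof.
  pose proof (rho_nonneg D gone). pose proof (rho_le D gone [] (Forall_nil _) eq_refl).
  simpl in H0. lra.
Qed.

Lemma rho_level {G} (D : BK G) n x : bU D n x -> rho D x <= (/2)^n.
Proof.
  intro H. pose proof (rho_le D x [(x, n)]). simpl in H0.
  rewrite Rplus_0_r in H0. apply H0; [constructor; auto|apply g_mul1].
Qed.

Lemma rho_le1 {G} (D : BK G) x : rho D x <= 1.
Proof. apply (rho_level D 0). apply bU0. Qed.

Lemma rho_small {G} (D : BK G) m x : rho D x < (/2)^m -> bU D m x.
Proof.
  intro H. destruct (rho_approx D x ((/2)^m - rho D x)) as [l [Ha [Hp Hw]]]; [lra|].
  subst x. apply (key D (length l)); auto. lra.
Qed.

Lemma rho_transfer {G} (D : BK G) x y :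
  (forall l, adm D l -> prodl G l = x ->
     exists l', adm D l' /\ prodl G l' = y /\ weight l' <= weight l) ->
  rho D y <= rho D x.
Proof.
  intro H. apply le_eps. intros eps He.
  destruct (rho_approx D x eps He) as [l [Ha [Hp Hw]]].
  destruct (H l Ha Hp) as [l' [Ha' [Hp' Hw']]].
  pose proof (rho_le D y l' Ha' Hp'). lra.
Qed.

Lemma rho_mul {G} (D : BK G) x y : rho D (gmul x y) <= rho D x + rho D y.
Proof.
  apply le_eps. intros eps He.
  destruct (rho_approx D x (eps/2)) as [l1 [Ha1 [Hp1 Hw1]]]; [lra|].
  destruct (rho_approx D y (eps/2)) as [l2 [Ha2 [Hp2 Hw2]]]; [lra|].
  pose proof (rho_le D (gmul x y) (l1 ++ l2)).
  rewrite weight_app in H. assert (rho D (gmul x y) <= weight l1 + weight l2); [|lra].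
  apply H; [apply Forall_app; auto|]. rewrite prodl_app. subst. auto.
Qed.

Fixpoint linv {G : Group} (l : list (G * nat)) : list (G * nat) :=
  match l with [] => [] | p :: r => linv r ++ [(ginv (fst p), snd p)] end.

Lemma rho_inv_le {G} (D : BK G) x : rho D (ginv x) <= rho D x.
Proof.
  apply rho_transfer. intros l Ha Hp. exists (linv l). subst x.
  induction l as [|p r IH]; simpl.
  - split; [constructor|]. split; [symmetry; apply g_inv1|lra].
  - inversion Ha; subst. destruct (IH H2) as [Ha' [Hp' Hw']].
    split; [|split].
    + apply Forall_app. split; auto. constructor; [|constructor]. simpl. apply bU_sym. auto.
    + rewrite prodl_app, Hp', g_invM. simpl. rewrite g_mul1. auto.
    + rewrite weight_app. simpl. lra.
Qed.

Lemma rho_inv {G} (D : BK G) x : rho D (ginv x) = rho D x.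
Proof.
  apply Rle_antisym; [apply rho_inv_le|]. rewrite <- (g_invK G x) at 1. apply rho_inv_le.
Qed.

Lemma rho_conj_le {G} (D : BK G) g x :
  rho D (gmul (gmul g x) (ginv g)) <= rho D x.
Proof.
  apply rho_transfer. intros l Ha Hp.
  exists (map (fun p => (gmul (gmul g (fst p)) (ginv g), snd p)) l). subst x.
  induction l as [|p r IH]; simpl.
  - split; [constructor|]. split; [rewrite g_mul1; symmetry; apply g_mulV|lra].
  - inversion Ha; subst. destruct (IH H2) as [Ha' [Hp' Hw']].
    split; [|split].
    + constructor; auto. apply bU_conj. auto.
    + rewrite Hp'. rewrite <- !gmul_assoc. f_equal. f_equal.
      rewrite g_VKl. auto.
    + lra.
Qed.

Lemma rho_conj {G} (D : BK G) g x :
  rho D (gmul (gmul (ginv g) x) g) = rho D x.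
Proof.
  apply Rle_antisym.
  - pose proof (rho_conj_le D (ginv g) x). rewrite g_invK in H. auto.
  - pose proof (rho_conj_le D g (gmul (gmul (ginv g) x) g)).
    replace (gmul (gmul g (gmul (gmul (ginv g) x) g)) (ginv g)) with x in H; auto.
    rewrite <- !gmul_assoc, g_KVl, g_mulV, g_mul1. auto.
Qed.

Lemma rho_zero {G} (D : BK G) x : rho D x = 0 -> x = gone.
Proof.
  intro H.
  destruct (bd0_comp G D) as [[Hn [H0 [Hs Ht]]] _].
  assert (bd0 G D gone x = 0).
  { destruct (Rle_or_lt (bd0 G D gone x) 0) as [h|h]; [specialize (Hn gone x); lra|].
    destruct (half_small _ h) as [n Hn'].
    assert (bU D (S n) x) by (apply rho_small; rewrite H; apply half_pos).
    pose proof (bU_small G D n x H1). pose proof (half_anti n (S n) (le_S _ _ (le_n n))). lra. }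
  symmetry. apply H0. auto.
Qed.
Definition dBK {G} (D : BK G) (x y : G) : R := rho D (gmul (ginv x) y).

Lemma bU_in_open {G} (D : BK G) V : is_open (tg_top G) V -> V gone ->
  exists m, forall x, bU D m x -> V x.
Proof.
  intros HV V1. destruct (bd0_comp G D) as [_ Hc].
  destruct (proj1 (Hc V) HV gone V1) as [eps [He Hb]].
  destruct (half_small eps He) as [N HN].
  exists (S N). intros x Hx. apply Hb. pose proof (bU_small G D N x Hx).
  pose proof (half_anti N (S N) (le_S _ _ (le_n N))). lra.
Qed.

Lemma dBK_metric {G} (D : BK G) : compatible_metric G (dBK D) /\ two_sided_invariant G (dBK D).
Proof.
  unfold dBK. split; [split|].
  - split; [|split; [|split]].
    + intros. apply rho_nonneg.
    + intros x y. split.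
      * intro H. apply rho_zero in H. rewrite <- (g_KVl G x y), H, g_mul1. auto.
      * intro H. subst. rewrite gmul_Vl. apply rho_one.
    + intros x y. rewrite <- rho_inv, g_invM, g_invK. auto.
    + intros x y z. replace (gmul (ginv x) z) with (gmul (gmul (ginv x) y) (gmul (ginv y) z)).
      * apply rho_mul.
      * rewrite <- gmul_assoc, g_KVl. auto.
  - intro U. split.
    + intros HU x Ux. destruct (open_translate G U x HU Ux) as [V [HV [V1 HVU]]].
      destruct (bU_in_open D V HV V1) as [m Hm].
      exists ((/2)^m). split; [apply half_pos|]. intros y Hy.
      rewrite <- (g_KVl G x y). apply HVU, Hm, rho_small. auto.
    + intro H. apply open_local. intros x Ux.
      destruct (H x Ux) as [eps [He Hb]].
      destruct (half_small eps He) as [m Hm].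
      destruct (bU_nb G D m) as [N [HN [N1 HNU]]].
      exists (fun y => N (gmul (ginv x) y)). split; [|split].
      * apply open_local. intros y Ny.
        destruct (tg_mul_cont G N (ginv x) y HN Ny) as [U1 [V1 [HU1 [HV1 [U1x [V1y HM]]]]]].
        exists V1. split; auto.
      * rewrite gmul_Vl. auto.
      * intros y Ny. apply Hb. pose proof (rho_level D m _ (HNU _ Ny)). lra.
  - intros g f1 f2. split.
    + rewrite g_invM, <- gmul_assoc, g_VKl. auto.
    + rewrite g_invM, <- gmul_assoc, (gmul_assoc _ (ginv f1) f2 g), gmul_assoc.
      apply rho_conj.
Qed.
Lemma find_max (P : nat -> Prop) : P 0%nat -> (exists n, ~ P n) -> exists m, P m /\ ~ P (S m).
Proof.
  intros H0 [n Hn]. apply NNPP. intro Hc. apply Hn.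
  clear Hn. induction n; auto. apply NNPP. intro HS. apply Hc. exists n. auto.
Qed.

Lemma compare {G1 G2} (D1 : BK G1) (D2 : BK G2) x1 x2 :
  (forall n, bU D1 (S n) x1 -> bU D2 n x2) -> (x1 = gone -> x2 = gone) ->
  rho D2 x2 <= 4 * rho D1 x1.
Proof.
  intros Ht H1. pose proof (rho_nonneg D1 x1) as Hn1.
  destruct (Req_dec (rho D1 x1) 0) as [h|h].
  - rewrite (H1 (rho_zero D1 x1 h)), rho_one. lra.
  - assert (hp : 0 < rho D1 x1) by lra.
    destruct (Rlt_or_le (rho D1 x1) ((/2)^1)) as [h0|h0].
    + destruct (find_max (fun m => rho D1 x1 < (/2)^(S m)) h0) as [m [Hm HSm]].
      * destruct (half_small _ hp) as [n Hn]. exists n. intro c.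
        pose proof (half_anti n (S n) (le_S _ _ (le_n n))). lra.
      * pose proof (rho_level D2 m x2 (Ht m (rho_small D1 (S m) x1 Hm))).
        rewrite !half_S in HSm. lra.
    + pose proof (rho_le1 D2 x2). simpl in h0. lra.
Qed.

Lemma dep_choice {X : Type} (good : X -> Prop) (Rl : nat -> X -> X -> Prop) (x0 : X) :
  good x0 -> (forall n x, good x -> exists y, good y /\ Rl n x y) ->
  exists f : nat -> X, f 0%nat = x0 /\ forall n, good (f n) /\ Rl n (f n) (f (S n)).
Proof.
  intros H0 H.
  pose (step := fun n (s : {x | good x}) =>
    let e := constructive_indefinite_description _ (H n (proj1_sig s) (proj2_sig s)) in
    exist good (proj1_sig e) (proj1 (proj2_sig e))).
  pose (g := fix g (n : nat) : {x | good x} :=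
    match n with 0%nat => exist good x0 H0 | S k => step k (g k) end).
  exists (fun n => proj1_sig (g n)). split; [reflexivity|].
  intro n. split; [apply proj2_sig|].
  change (g (S n)) with (step n (g n)). unfold step. simpl.
  destruct (constructive_indefinite_description _ _) as [y Hy]. simpl. apply Hy.
Qed.
Lemma side_step (A : Group) (Ga Gb : TopGroup) (ja : A -> Ga) (jb : A -> Gb)
  (hS : is_SIN Ga) (d : Ga -> Ga -> R) (Hd : compatible_metric Ga d) (r : R) (hr : 0 < r)
  (Va : Ga -> Prop) (Vb : Gb -> Prop) (hVa : nbhd_one Ga Va) (hVb : nbhd_one Gb Vb)
  (hja : ja gone = gone) (hjb : jb gone = gone)
  (ht : forall S, subspace_open Gb A jb S -> subspace_open Ga A ja S) :
  exists V, nbhd_one Ga V /\ conj_inv Ga V /\ sym_set Ga V /\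
    (forall a b c, V a -> V b -> V c -> Va (gmul a (gmul b c))) /\
    (forall x, V x -> d gone x < r) /\ (forall a, V (ja a) -> Vb (jb a)).
Proof.
  destruct hVa as [Oa [HOa [Oa1 HOaV]]]. destruct hVb as [Ob [HOb [Ob1 HObV]]].
  destruct (ht (fun a => Ob (jb a))) as [O' [HO' HO'e]]; [exists Ob; split; [auto|tauto]|].
  assert (O'1 : O' gone) by (rewrite <- hja; apply HO'e; rewrite hjb; auto).
  pose proof Hd as [[Hn [H0 _]] _].
  destruct (step_lemma Ga hS (fun x => (Oa x /\ O' x) /\ d gone x < r)) as [V [HV [Hc [Hs Hcube]]]].
  - apply open_inter; [apply open_inter; auto|]. apply ball_open. auto.
  - split; [auto|]. rewrite (proj2 (H0 gone gone) eq_refl). auto.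
  - assert (HVO : forall x, V x -> (Oa x /\ O' x) /\ d gone x < r).
    { intros x Vx. pose proof (nbhd_one_1 _ _ HV). pose proof (Hcube x gone gone Vx H H) as Hc'. rewrite !g_mul1 in Hc'. exact Hc'. }
    exists V. split; auto. split; auto. split; auto. split; [|split].
    + intros a b c Va' Vb' Vc'. apply HOaV. apply Hcube; auto.
    + intros x Vx. apply HVO. auto.
    + intros a Va'. apply HObV. apply HO'e. apply HVO. auto.
Qed.
Theorem mainTheorem7
  (G1 G2 : TopGroup) (A : Group) (j1 : A -> G1) (j2 : A -> G2)
  (hG1m : metrizable G1) (hG2m : metrizable G2)
  (hG1s : is_SIN G1) (hG2s : is_SIN G2)
  (hj1 : subgroup_embedding A G1 j1) (hj2 : subgroup_embedding A G2 j2)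
  (htop : forall S : A -> Prop,
            subspace_open G1 A j1 S <-> subspace_open G2 A j2 S) :
  exists (d1 : G1 -> G1 -> R) (d2 : G2 -> G2 -> R) (K : R),
    compatible_metric G1 d1 /\ two_sided_invariant G1 d1 /\
    compatible_metric G2 d2 /\ two_sided_invariant G2 d2 /\
    0 < K /\
    forall a1 a2 : A,
      (1 / K) * d1 (j1 a1) (j1 a2) <= d2 (j2 a1) (j2 a2) /\
      d2 (j2 a1) (j2 a2) <= K * d1 (j1 a1) (j1 a2).
Proof.
  destruct hG1m as [d01 Hd01]. destruct hG2m as [d02 Hd02].
  destruct hj1 as [hm1 hi1]. destruct hj2 as [hm2 hi2].
  pose proof (hom_one _ _ _ hm1) as h11. pose proof (hom_one _ _ _ hm2) as h21.
  set (good := fun p : (G1 -> Prop) * (G2 -> Prop) =>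
    nbhd_one G1 (fst p) /\ conj_inv G1 (fst p) /\ sym_set G1 (fst p) /\
    nbhd_one G2 (snd p) /\ conj_inv G2 (snd p) /\ sym_set G2 (snd p)).
  set (Rl := fun n (p q : (G1 -> Prop) * (G2 -> Prop)) =>
    ((forall a b c, fst q a -> fst q b -> fst q c -> fst p (gmul a (gmul b c))) /\
     (forall x, fst q x -> d01 gone x < (/2)^(S n)) /\
     (forall a, fst q (j1 a) -> snd p (j2 a))) /\
    ((forall a b c, snd q a -> snd q b -> snd q c -> snd p (gmul a (gmul b c))) /\
     (forall x, snd q x -> d02 gone x < (/2)^(S n)) /\
     (forall a, snd q (j2 a) -> fst p (j1 a)))).
  destruct (dep_choice good Rl (fun _ => True, fun _ => True)) as [f [f0 Hf]].
  - assert (forall G : TopGroup, nbhd_one G (fun _ => True)).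
    { intro G. exists (fun _ => True). split; [apply open_full|auto]. }
    unfold good, conj_inv, sym_set; simpl. repeat split; auto.
  - intros n [V W] [HV1 [HV2 [HV3 [HW1 [HW2 HW3]]]]]. simpl in *.
    destruct (side_step A G1 G2 j1 j2 hG1s d01 Hd01 ((/2)^(S n)) (half_pos _) V W HV1 HW1
      h11 h21 (fun S => proj2 (htop S))) as [V' [HV'1 [HV'2 [HV'3 [HV'4 [HV'5 HV'6]]]]]].
    destruct (side_step A G2 G1 j2 j1 hG2s d02 Hd02 ((/2)^(S n)) (half_pos _) W V HW1 HV1
      h21 h11 (fun S => proj1 (htop S))) as [W' [HW'1 [HW'2 [HW'3 [HW'4 [HW'5 HW'6]]]]]].
    exists (V', W'). unfold good, Rl; simpl. repeat split; auto.
  - assert (Hg : forall n, good (f n)) by (intro n; apply Hf).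
    assert (HR : forall n, Rl n (f n) (f (S n))) by (intro n; apply Hf).
    unfold good, Rl in *.
    set (D1 := {| bU := fun n => fst (f n);
                  bU0 := ltac:(intro x; cbv beta; rewrite f0; exact I);
                  bU_nb := fun n => proj1 (Hg n);
                  bU_conj := fun n => proj1 (proj2 (Hg n));
                  bU_sym := fun n => proj1 (proj2 (proj2 (Hg n)));
                  bU_cube := fun n => proj1 (proj1 (HR n));
                  bd0 := d01; bd0_comp := Hd01;
                  bU_small := fun n => proj1 (proj2 (proj1 (HR n))) |} : BK G1).
    set (D2 := {| bU := fun n => snd (f n);
                  bU0 := ltac:(intro x; cbv beta; rewrite f0; exact I);
                  bU_nb := fun n => proj1 (proj2 (proj2 (proj2 (Hg n))));
                  bU_conj := fun n => proj1 (proj2 (proj2 (proj2 (proj2 (Hg n)))));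
                  bU_sym := fun n => proj2 (proj2 (proj2 (proj2 (proj2 (Hg n)))));
                  bU_cube := fun n => proj1 (proj2 (HR n));
                  bd0 := d02; bd0_comp := Hd02;
                  bU_small := fun n => proj1 (proj2 (proj2 (HR n))) |} : BK G2).
    exists (dBK D1), (dBK D2), 4.
    destruct (dBK_metric D1) as [M1 I1]. destruct (dBK_metric D2) as [M2 I2].
    split; auto. split; auto. split; auto. split; auto. split; [lra|].
    intros a1 a2. unfold dBK.
    rewrite <- (hom_inv _ _ _ hm1), <- hm1, <- (hom_inv _ _ _ hm2), <- hm2.
    set (b := gmul (ginv a1) a2).
    split.
    + assert (rho D1 (j1 b) <= 4 * rho D2 (j2 b)); [|lra].
      apply compare.
      * intros n H. apply (proj2 (proj2 (proj2 (HR n)))). exact H.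
      * intro H. rewrite <- h11. f_equal. apply hi2. rewrite h21. exact H.
    + apply compare.
      * intros n H. apply (proj2 (proj2 (proj1 (HR n)))). exact H.
      * intro H. rewrite <- h21. f_equal. apply hi1. rewrite h11. exact H.
Qed.
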